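(* Let $n$ be a positive integer. Then $$ \sum_{k=0}^{n-1}[4k-1]_{q^2}[4k-1]^2\frac{(q^{-2};q^4)_k^4}{(q^4;q^4)_k^4}q^{4k} =(q^{2n}+1)^4[n]_{q^2}^4\frac{(q^{-2};q^4)^4_{n}}{(q^4;q^4)_{n}^4} \left(2\cdot\frac{q^5+q^{4n+1}(q^{4n-2}-q^2-1)}{(q^2-1)^2}-q^{4n}\right). $$
   Context: $q$ is an indeterminate. For an integer $m$, $[m]=[m]_q=(1-q^m)/(1-q)$ and $[m]_{q^2}=(1-q^{2m})/(1-q^2)$. The $q$-shifted factorial is $(a;q)_0=1$ and $(a;q)_k=(1-a)(1-aq)\cdots(1-aq^{k-1})$ for $k\ge1$. The identity is an identity of rational functions in $q$. *)

(* Defs.v *)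
From HB Require Import structures.
From mathcomp Require Import all_boot all_order all_algebra fraction.
Set Implicit Arguments. Unset Strict Implicit. Unset Printing Implicit Defensive.
Import Order.TTheory GRing.Theory Num.Theory.
Local Open Scope ring_scope.

Definition RatFun := {fraction {poly rat}}.
Definition qvar : RatFun := @FracField.tofrac _ ('X : {poly rat}).

Definition qint (F : fieldType) (x : F) (m : int) : F := (1 - x ^ m) / (1 - x).

Definition qpoch (F : fieldType) (a x : F) (k : nat) : F :=
  \prod_(i < k) (1 - a * x ^+ i).

(* Main.v *)
Require Import Defs.
From HB Require Import structures.
From mathcomp Require Import all_boot all_order all_algebra fraction.
From mathcomp Require Import ring lra zify.
Import Order.TTheory GRing.Theory Num.Theory.
Local Open Scope ring_scope.

Lemma qvar_neq0 : qvar != 0.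
Proof.
rewrite /qvar tofrac_eq0; apply/eqP => h.
by have := congr1 (fun p : {poly rat} => p`_1) h; rewrite coefX coef0.
Qed.

Lemma one_sub_qX_neq0 k : (0 < k)%N -> 1 - qvar ^+ k != 0.
Proof.
move=> hk.
have -> : 1 - qvar ^+ k = FracField.tofrac (1 - 'X^k : {poly rat}).
  by rewrite /qvar rmorphB rmorph1 rmorphXn.
rewrite tofrac_eq0; apply/eqP => h.
have := congr1 (fun p : {poly rat} => p.[0]) h.
rewrite !hornerE expr0n eqn0Ngt hk /= subr0 => /eqP; by rewrite oner_eq0.
Qed.

Lemma qpochS (F : fieldType) (a x : F) k :
  qpoch a x k.+1 = qpoch a x k * (1 - a * x ^+ k).
Proof. by rewrite /qpoch big_ord_recr. Qed.

Lemma qpoch_q4_neq0 k : qpoch (qvar ^+ 4) (qvar ^+ 4) k != 0.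
Proof.
elim: k => [|k IH]; first by rewrite /qpoch big_ord0 oner_eq0.
rewrite qpochS; apply: mulf_neq0; first exact: IH.
rewrite -exprM -exprD; exact: one_sub_qX_neq0.
Qed.



Section Gen.
Variable F : fieldType.
Variable q : F.
Hypothesis hq : q != 0.
Hypothesis hX : forall k, (0 < k)%N -> 1 - q ^+ k != 0.

Definition T (k : nat) : F :=
     qint (q ^+ 2) (4 * k%:Z - 1) * (qint q (4 * k%:Z - 1)) ^+ 2
     * (qpoch (q ^- 2) (q ^+ 4) k) ^+ 4 / (qpoch (q ^+ 4) (q ^+ 4) k) ^+ 4
     * q ^+ (4 * k).
Definition R (n : nat) : F :=
    (q ^+ (2 * n) + 1) ^+ 4 * (qint (q ^+ 2) n%:Z) ^+ 4
     * (qpoch (q ^- 2) (q ^+ 4) n) ^+ 4 / (qpoch (q ^+ 4) (q ^+ 4) n) ^+ 4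
     * (2 * ((q ^+ 5 + q ^+ (4 * n + 1) * (q ^+ (4 * n - 2) - q ^+ 2 - 1))
             / (q ^+ 2 - 1) ^+ 2)
        - q ^+ (4 * n)).

Lemma pw m c j k : k = (c + 2 * m * j)%N -> q ^+ k = q ^+ c * (q ^+ (2 * m)) ^+ j.
Proof. by move=> ->; rewrite exprD exprM. Qed.

Lemma hb k : qpoch (q ^+ 4) (q ^+ 4) k != 0.
Proof.
elim: k => [|k IH]; first by rewrite /qpoch big_ord0 oner_eq0.
rewrite qpochS; apply: mulf_neq0; first exact: IH.
rewrite -exprM -exprD; exact: hX.
Qed.

Lemma R0 : R 0 = 0.
Proof.
by rewrite /R /qint (_ : (q ^+ 2) ^ (0%:Z) = 1) // subrr mul0r expr0n /= mulr0 !mul0r.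
Qed.

Lemma step_0 : R 0 + T 0 = R 1.
Proof.
have h1 : 1 - q != 0 by have := hX 1 isT; rewrite expr1.
have h2 : 1 - q ^+ 2 != 0 by exact: hX.
have h2' : q ^+ 2 - 1 != 0 by rewrite -opprB oppr_eq0.
have h8 : 1 - q ^+ 8 != 0 by exact: hX.
rewrite R0 add0r /R /T /qint /qpoch !big_ord0 !big_ord1.
rewrite (_ : 4 * 0%:Z - 1 = - 1) // !exprN1 (_ : (q ^+ 2) ^ 1%:Z = q ^+ 2) //.
rewrite !expr0 !mulr1 !expr1n.
field.
by rewrite h2' (hX 4 isT) hq h2 h1 oner_eq0.
Qed.

Lemma step_S m : R m.+1 + T m.+1 = R m.+2.
Proof.
have h1 : 1 - q != 0 by have := hX 1 isT; rewrite expr1.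
have h2 : 1 - q ^+ 2 != 0 by exact: hX.
have h2' : q ^+ 2 - 1 != 0 by rewrite -opprB oppr_eq0.
have hbm := hb m.+1.
have h8 : 1 - q ^+ (8 + 2 * m * 2) != 0 by exact: hX.
rewrite /R /T /qint !(@qpochS _ _ _ m.+1).
set a := qpoch _ _ m.+1. set b := qpoch _ _ m.+1.
rewrite (_ : 4 * m.+1%:Z - 1 = (4 * m + 3)%N); last by lia.
change ((q ^+ 2) ^ (Posz (4 * m + 3))) with ((q ^+ 2) ^+ (4 * m + 3)).
change (q ^ (Posz (4 * m + 3))) with (q ^+ (4 * m + 3)).
change ((q ^+ 2) ^ (Posz m.+1)) with ((q ^+ 2) ^+ m.+1).
change ((q ^+ 2) ^ (Posz m.+2)) with ((q ^+ 2) ^+ m.+2).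
rewrite -!exprM.
rewrite (pw m 2 1 (2 * m.+1)); last by lia.
rewrite (pw m 5 2 (4 * m.+1 + 1)); last by lia.
rewrite (pw m 2 2 (4 * m.+1 - 2)); last by lia.
rewrite (pw m 4 2 (4 * m.+1)); last by lia.
rewrite (pw m 6 4 (2 * (4 * m + 3))); last by lia.
rewrite (pw m 3 2 (4 * m + 3)); last by lia.
rewrite (pw m 4 1 (2 * m.+2)); last by lia.
rewrite (pw m 9 2 (4 * m.+2 + 1)); last by lia.
rewrite (pw m 6 2 (4 * m.+2 - 2)); last by lia.
rewrite (pw m 8 2 (4 * m.+2)); last by lia.
rewrite (pw m 8 2 (8 + 2 * m * 2)) // in h8.
set z := q ^+ (2 * m).
field.
by rewrite h2' mulrA -exprD h8 hbm hq h2 h1.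
Qed.

Lemma gen n : \sum_(k < n) T k = R n.
Proof.
elim: n => [|n IH]; first by rewrite big_ord0 R0.
rewrite big_ord_recr IH /=.
by case: n {IH} => [|m]; [exact: step_0 | exact: step_S].
Qed.

End Gen.

Theorem theorem2 (n : nat) (hn : (0 < n)%N) :
  let q := qvar in
  \sum_(k < n)
     qint (q ^+ 2) (4 * k%:Z - 1) * (qint q (4 * k%:Z - 1)) ^+ 2
     * (qpoch (q ^- 2) (q ^+ 4) k) ^+ 4 / (qpoch (q ^+ 4) (q ^+ 4) k) ^+ 4
     * q ^+ (4 * k)
  = (q ^+ (2 * n) + 1) ^+ 4 * (qint (q ^+ 2) n%:Z) ^+ 4
     * (qpoch (q ^- 2) (q ^+ 4) n) ^+ 4 / (qpoch (q ^+ 4) (q ^+ 4) n) ^+ 4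
     * (2 * ((q ^+ 5 + q ^+ (4 * n + 1) * (q ^+ (4 * n - 2) - q ^+ 2 - 1))
             / (q ^+ 2 - 1) ^+ 2)
        - q ^+ (4 * n)).
Proof.
exact: (@gen _ _ qvar_neq0 one_sub_qX_neq0 n).
Qed.
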